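(* Let $\pi\in S_n$, $0\le u<v\le n$, and assume that $I=\{u+1,\dots,v\}$ is a $\pi$-section. Let $\sigma$ be the restriction of $\pi$ to $I$, regarded as the permutation $k\mapsto\pi(u+k)-u$ of $\{1,\dots,v-u\}$. Then $[c_u]_{\beta_\pi}$ and $[c_v]_{\beta_\pi}$ are narrows of $G/\beta_\pi$, and the subdiagram of the canonical diagram of $G/\beta_\pi$ determined by the interval $\bigl[[c_u]_{\beta_\pi},[c_v]_{\beta_\pi}\bigr]$ equals (up to boundary similarity) the canonical diagram of $G'/\beta_\sigma$, where $G'$ is the square grid of length $2(v-u)$.
   Context: For $m\ge1$, the square grid of length $2m$ is the direct product of chains $0=c_0\prec\dots\prec c_m$ and $0=d_0\prec\dots\prec d_m$, elements written $c_i\vee d_j$; $G$ denotes the one with $m=n$. For $\pi\in S_m$, $\beta_\pi$ is the join, in the lattice of join-congruences (equivalences compatible with $\vee$), of the smallest join-congruences collapsing $\{c_{i-1}\vee d_{\pi(i)},c_i\vee d_{\pi(i)-1},c_i\vee d_{\pi(i)}\}$, $i=1,\dots,m$; the quotient is a slim semimodular lattice of length $m$ and its canonical diagram is its planar diagram whose left boundary chain is $\{[c_i]_{\beta_\pi}\}$ and right boundary chain is $\{[d_i]_{\beta_\pi}\}$ (diagrams considered up to boundary similarity, i.e. up to isomorphisms preserving left and right boundary chains). A narrows of a lattice is an element comparable with every element. For $\sigma\in S_n$, a set $J$ is closed if $\sigma(J)\subseteq J$; a nonempty interval $\{a,\dots,b\}$ of $\{1<\dots<n\}$ is a $\sigma$-section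 if it, $\{1,\dots,a-1\}$ and $\{b+1,\dots,n\}$ are closed. *)

(* Defs.v *)
From mathcomp Require Import all_boot all_fingroup.
Set Implicit Arguments. Unset Strict Implicit. Unset Printing Implicit Defensive.

(* The square grid of length 2m: pairs (i,j) with 0 <= i,j <= m, the pair (i,j)
   standing for c_i \/ d_j.  Join is componentwise max. *)
Notation gridT m := ('I_m.+1 * 'I_m.+1)%type.

Definition gjoin (m : nat) (x y : gridT m) : gridT m :=
  (if x.1 <= y.1 then y.1 else x.1, if x.2 <= y.2 then y.2 else x.2).

Definition gc (m : nat) (i : 'I_m.+1) : gridT m := (i, ord0).
Definition gd (m : nat) (j : 'I_m.+1) : gridT m := (ord0, j).

Definition join_congruence (m : nat) (R : gridT m -> gridT m -> Prop) : Prop :=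
  [/\ (forall x, R x x), (forall x y, R x y -> R y x),
      (forall x y z, R x y -> R y z -> R x z)
    & (forall x y z, R x y -> R (gjoin x z) (gjoin y z))].

Definition collapses (m : nat) (R : gridT m -> gridT m -> Prop)
  (S : seq (gridT m)) : Prop :=
  forall x y, x \in S -> y \in S -> R x y.

Definition jcon_gen (m : nat) (S : seq (gridT m)) (x y : gridT m) : Prop :=
  forall R, join_congruence R -> collapses R S -> R x y.

(* Permutations of {1..m} are represented as p : 'S_m acting on 0-based
   ordinals: the 1-based pi(i) is (p (i-1)) + 1.  For the 1-based index
   i = k+1, the triple {c_{i-1} \/ d_{pi i}, c_i \/ d_{pi i - 1}, c_i \/ d_{pi i}}
   is the following. *)
Definition triple (m : nat) (p : 'S_m) (k : 'I_m) : seq (gridT m) :=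
  [:: (inord k, inord (p k).+1); (inord k.+1, inord (p k)); (inord k.+1, inord (p k).+1)].

(* beta_pi: the join (in the lattice of join-congruences) of the smallest
   join-congruences collapsing the triples, i.e. the least join-congruence
   containing all of them. *)
Definition beta (m : nat) (p : 'S_m) (x y : gridT m) : Prop :=
  forall R, join_congruence R ->
    (forall k x' y', jcon_gen (triple p k) x' y' -> R x' y') -> R x y.

(* order of the quotient G/beta: [x] <= [y] iff [x] \/ [y] = [y] *)
Definition cls_le (m : nat) (p : 'S_m) (x y : gridT m) : Prop :=
  beta p (gjoin x y) y.

Definition narrows (m : nat) (p : 'S_m) (a : gridT m) : Prop :=
  forall x, cls_le p x a \/ cls_le p a x.

Definition closedJ (n : nat) (p : 'S_n) (J : {set 'I_n}) : bool :=
  p @: J \subset J.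

Definition segm (n a b : nat) : {set 'I_n} := [set k : 'I_n | a <= k.+1 <= b].

Definition is_section (n : nat) (p : 'S_n) (a b : nat) : Prop :=
  [/\ 0 < a <= b, b <= n, closedJ p (segm n a b),
      closedJ p (segm n 1 a.-1) & closedJ p (segm n b.+1 n)].

(* 0-based action of p on nat (identity outside 'I_n) *)
Definition perm_nat (n : nat) (p : 'S_n) (i : nat) : nat :=
  match @insub nat (fun i => i < n) 'I_n i with Some k => val (p k) | None => i end.

Definition interval_iso (n m : nat) (p : 'S_n) (s : 'S_m) (a b : gridT n)
  (f : gridT m -> gridT n) : Prop :=
  [/\ (forall x y, cls_le s x y <-> cls_le p (f x) (f y)),
      (forall x, cls_le p a (f x) /\ cls_le p (f x) b)
    & (forall y, cls_le p a y -> cls_le p y b -> exists x, beta p (f x) y)].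

Arguments gc m i : clear implicits.
Arguments gd m j : clear implicits.

(* Main.v *)
Require Import Defs.
From mathcomp Require Import all_boot all_fingroup.
From mathcomp Require Import zify.
From Stdlib Require Import Lia.
Set Implicit Arguments. Unset Strict Implicit. Unset Printing Implicit Defensive.

Definition pt (m i j : nat) : gridT m := (inord i, inord j).

Lemma beta_jc m (p : 'S_m) : join_congruence (beta p).
Proof.
split.
- by move=> x R [Hr _ _ _] _.
- move=> x y H R HR Hg; case: (HR) => _ Hs _ _; apply: Hs; exact: H.
- move=> x y z H1 H2 R HR Hg; case: (HR) => _ _ Ht _; exact: Ht (H1 R HR Hg) (H2 R HR Hg).
- move=> x y z H R HR Hg; case: (HR) => _ _ _ Hj; apply: Hj; exact: H.
Qed.

Lemma bR m (p : 'S_m) x : beta p x x. Proof. by case: (beta_jc p). Qed.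
Lemma bS m (p : 'S_m) x y : beta p x y -> beta p y x. Proof. by case: (beta_jc p) => _ H _ _; apply: H. Qed.
Lemma bT m (p : 'S_m) x y z : beta p x y -> beta p y z -> beta p x z.
Proof. by case: (beta_jc p) => _ _ H _; apply: H. Qed.
Lemma bJ m (p : 'S_m) x y z : beta p x y -> beta p (gjoin x z) (gjoin y z).
Proof. by case: (beta_jc p) => _ _ _ H; apply: H. Qed.

Lemma beta_triple m (p : 'S_m) k x y :
  x \in triple p k -> y \in triple p k -> beta p x y.
Proof. move=> Hx Hy R HR Hg; apply: (Hg k) => R' _ Hc; exact: Hc. Qed.

Lemma beta_min m (p : 'S_m) (R : gridT m -> gridT m -> Prop) :
  join_congruence R -> (forall k, collapses R (triple p k)) ->
  forall x y, beta p x y -> R x y.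
Proof. move=> HR Hc x y H; apply: H => // k x' y' Hg; exact: Hg. Qed.

Lemma pt1 m i j : i <= m -> val (pt m i j).1 = i.
Proof. by move=> H; rewrite /= inordK. Qed.
Lemma pt2 m i j : j <= m -> val (pt m i j).2 = j.
Proof. by move=> H; rewrite /= inordK. Qed.
Lemma ptK m (x : gridT m) : pt m x.1 x.2 = x.
Proof. by case: x => a b; rewrite /pt !inord_val. Qed.
Lemma pt_congr m i j i' j' : i = i' -> j = j' -> pt m i j = pt m i' j'.
Proof. by move=> -> ->. Qed.

Lemma gjoinE m (x y : gridT m) :
  gjoin x y = pt m (maxn x.1 y.1) (maxn x.2 y.2).
Proof.
case: x y => [a b] [c d]; rewrite /gjoin /pt /=.
have := ltn_ord a; have := ltn_ord c; have := ltn_ord b; have := ltn_ord d.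
move=> *; congr pair; apply: val_inj; rewrite /= inordK; case: leqP => H /=; lia.
Qed.

Lemma gjoin_pt m i j i' j' a b : i <= m -> j <= m -> i' <= m -> j' <= m ->
  maxn i i' = a -> maxn j j' = b -> gjoin (pt m i j) (pt m i' j') = pt m a b.
Proof. by move=> *; rewrite gjoinE !pt1 ?pt2 //; apply: pt_congr. Qed.

Lemma bJpt m (p : 'S_m) i j i' j' k l a b c d :
  beta p (pt m i j) (pt m i' j') ->
  i <= m -> j <= m -> i' <= m -> j' <= m -> k <= m -> l <= m ->
  maxn i k = a -> maxn j l = b -> maxn i' k = c -> maxn j' l = d ->
  beta p (pt m a b) (pt m c d).
Proof.
move=> ? *; rewrite -(@gjoin_pt m i j k l a b) // -(@gjoin_pt m i' j' k l c d) //.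
exact: bJ.
Qed.

Lemma gc_pt m t : gc m (inord t) = pt m t 0.
Proof. by rewrite /gc /pt; congr pair; apply: val_inj; rewrite /= inordK. Qed.

Lemma lemA n (p : 'S_n) t : t <= n ->
  (forall k : 'I_n, k < t -> p k < t) -> (forall k : 'I_n, t <= k -> t <= p k) ->
  forall w, w <= t -> beta p (pt n t w) (pt n t 0) /\ beta p (pt n w t) (pt n 0 t).
Proof.
move=> htn C1 C2; elim=> [|w IH] hw; first by split; apply: bR.
have [IH1 IH2] := IH (ltnW hw).
have wn : w < n by lia.
split.
- set k := (p^-1 (Ordinal wn))%g.
  have pk : (p k : nat) = w by rewrite /k permKV.
  have kt : k < t.
    case: (ltnP k t) => // /C2 H.
    lia.
  have H : beta p (pt n k.+1 w) (pt n k.+1 w.+1).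
    apply: (beta_triple (k := k)); rewrite !inE /pt pk eqxx ?orbT //.
  have H2 : beta p (pt n t w) (pt n t w.+1).
    apply: (bJpt (k := t) (l := 0) H); lia.
  exact: bT (bS H2) IH1.
- have kt : p (Ordinal wn) < t by apply: C1.
  have H : beta p (pt n w (p (Ordinal wn)).+1) (pt n w.+1 (p (Ordinal wn)).+1).
    by apply: (beta_triple (k := Ordinal wn)); rewrite !inE /pt ?eqxx ?orbT.
  have H2 : beta p (pt n w t) (pt n w.+1 t).
    apply: (bJpt (k := 0) (l := t) H); have := ltn_ord (p (Ordinal wn)); lia.
  exact: bT (bS H2) IH2.
Qed.

Lemma closedE n (p : 'S_n) a b : closedJ p (segm n a b) ->
  forall k : 'I_n, a <= k.+1 <= b -> a <= (p k).+1 <= b.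
Proof.
move=> /subsetP H k Hk.
have Hk' : k \in segm n a b by rewrite inE.
by have := H (p k) (imset_f _ Hk'); rewrite inE.
Qed.

Lemma ptn m (x : gridT m) : x.1 <= m /\ x.2 <= m.
Proof. by split; rewrite -ltnS; apply: ltn_ord. Qed.

Lemma narrowsA n (p : 'S_n) t : t <= n ->
  (forall k : 'I_n, k < t -> p k < t) -> (forall k : 'I_n, t <= k -> t <= p k) ->
  narrows p (gc n (inord t)).
Proof.
move=> htn C1 C2 x; rewrite gc_pt /cls_le -(ptK x).
have [h1 h2] := ptn x; set i := val x.1 in h1 *; set j := val x.2 in h2 *.
have A := lemA htn C1 C2.
case: (leqP t i) => ti.
- right; rewrite (@gjoin_pt n t 0 i j i j); try lia; exact: bR.
case: (leqP j t) => jt.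
- left; rewrite (@gjoin_pt n i j t 0 t j); try lia; exact: (A j jt).1.
- right; rewrite (@gjoin_pt n t 0 i j t j) //; try lia.
  have [_ H] := A t (leqnn t).
  apply: (bJpt (k := i) (l := j) H); lia.
Qed.

Definition Fm (u n m : nat) (x : gridT m) : gridT n := pt n (u + x.1) (u + x.2).
Definition Gm (u n m : nat) (y : gridT n) : gridT m :=
  pt m (minn (y.1 - u) m) (minn (y.2 - u) m).

Lemma F_pt u n m i j : u + m <= n -> i <= m -> j <= m ->
  Fm u n (pt m i j) = pt n (u + i) (u + j).
Proof. by move=> *; rewrite /Fm pt1 ?pt2. Qed.

Lemma G_pt u n m i j : i <= n -> j <= n ->
  Gm u m (pt n i j) = pt m (minn (i - u) m) (minn (j - u) m).
Proof. by move=> *; rewrite /Gm pt1 ?pt2. Qed.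

Lemma F_join u n m (x y : gridT m) : u + m <= n ->
  Fm u n (gjoin x y) = gjoin (Fm u n x) (Fm u n y).
Proof.
move=> H; have [? ?] := ptn x; have [? ?] := ptn y.
rewrite gjoinE F_pt; try lia.
rewrite /Fm (@gjoin_pt n _ _ _ _ (u + maxn x.1 y.1) (u + maxn x.2 y.2)) //; lia.
Qed.

Lemma G_join u n m (x y : gridT n) :
  Gm u m (gjoin x y) = gjoin (Gm u m x) (Gm u m y).
Proof.
have [? ?] := ptn x; have [? ?] := ptn y.
rewrite gjoinE G_pt; try lia.
rewrite /Gm (@gjoin_pt m _ _ _ _ (minn (maxn x.1 y.1 - u) m) (minn (maxn x.2 y.2 - u) m)) //; lia.
Qed.

Lemma GF u n m (x : gridT m) : u + m <= n -> Gm u m (Fm u n x) = x.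
Proof.
move=> H; have [? ?] := ptn x.
rewrite /Fm G_pt; try lia.
rewrite -[RHS]ptK; apply: pt_congr; lia.
Qed.

Lemma perm_natE n (p : 'S_n) i (H : i < n) : perm_nat p i = p (Ordinal H).
Proof. by rewrite /perm_nat insubT. Qed.

Lemma gd_pt m t : gd m (inord t) = pt m 0 t.
Proof. by rewrite /gd /pt; congr pair; apply: val_inj; rewrite /= inordK. Qed.

Unset Implicit Arguments.
Theorem lemma4p5 (n : nat) (p : 'S_n) (u v : nat) (huv : u < v) (hvn : v <= n)
  (hsec : is_section p u.+1 v) (s : 'S_(v - u))
  (hs : forall k : 'I_(v - u), val (s k) = perm_nat p (u + k) - u) :
  narrows p (gc n (inord u)) /\ narrows p (gc n (inord v)) /\
  exists f : gridT (v - u) -> gridT n,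
    [/\ interval_iso p s (gc n (inord u)) (gc n (inord v)) f,
        (forall k : 'I_(v - u).+1, beta p (f (gc (v - u) k)) (gc n (inord (u + k))))
      & (forall k : 'I_(v - u).+1,
           beta p (f (gd (v - u) k)) (gjoin (gc n (inord u)) (gd n (inord (u + k)))))].
Proof.
case: hsec => _ _ Cm Cl Cr.
have Cmid := closedE Cm; have Clo := closedE Cl; have Cro := closedE Cr.
have C1 : forall k : 'I_n, k < u -> p k < u.
  move=> k hk; have := Clo k; have := ltn_ord k; have := ltn_ord (p k); lia.
have Cm' : forall k : 'I_n, u <= k < v -> u <= p k < v.
  move=> k hk; have := Cmid k; have := ltn_ord k; have := ltn_ord (p k); lia.
have C4 : forall k : 'I_n, v <= k -> v <= p k.
  move=> k hk; have := Cro k; have := ltn_ord k; have := ltn_ord (p k); lia.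
have C2 : forall k : 'I_n, u <= k -> u <= p k.
  move=> k hk; case: (ltnP k v) => h; first by have := Cm' k; lia.
  by have := C4 k h; lia.
have C3 : forall k : 'I_n, k < v -> p k < v.
  move=> k hk; case: (ltnP k u) => h; first by have := C1 k h; lia.
  by have := Cm' k; lia.
have hun : u <= n by lia.
have LAu := lemA hun C1 C2.
have LAv := lemA hvn C3 C4.
split; first exact: narrowsA hun C1 C2.
split; first exact: narrowsA hvn C3 C4.
have hm : u + (v - u) <= n by lia.
have hsE : forall (k : 'I_(v - u)) (k' : 'I_n), (k' : nat) = u + k ->
    (s k : nat) + u = p k' /\ u <= p k' < v.
  move=> k k' hk; have hk2 : u + k < n by have := ltn_ord k; lia.
  have E : Ordinal hk2 = k' by apply: val_inj => /=; lia.
  have := Cm' k'; have := ltn_ord k; rewrite hs (perm_natE p hk2) E /=; lia.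
exists (@Fm u n (v - u)).
split.
- split.
  + move=> x y; rewrite /cls_le -F_join //; split.
    * apply: (beta_min (R := fun a b => beta p (Fm u n a) (Fm u n b))).
      -- split.
         ++ by move=> a; apply: bR.
         ++ by move=> a b; apply: bS.
         ++ by move=> a b c; apply: bT.
         ++ by move=> a b c H; rewrite !F_join //; apply: bJ.
      -- move=> k a b.
         have hk2 : u + k < n by have := ltn_ord k; lia.
         have [E1 E2] := hsE k (Ordinal hk2) erefl.
         have hsk := ltn_ord (s k); have hkk := ltn_ord k.
         have M : forall a, a \in triple s k -> Fm u n a \in triple p (Ordinal hk2).
           move=> a'; rewrite /triple !inE => /or3P [] /eqP ->; rewrite F_pt; try lia;
           apply/or3P; [constructor 1 | constructor 2 | constructor 3];
           apply/eqP; apply: pt_congr => /=; lia.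
         by move=> Ha Hb; apply: (beta_triple (M a Ha) (M b Hb)).
    * move=> H.
      have := (beta_min (R := fun a b => beta s (Gm u (v - u) a) (Gm u (v - u) b))) _ _ _ _ H.
      rewrite !GF //; apply.
      -- split.
         ++ by move=> a; apply: bR.
         ++ by move=> a b; apply: bS.
         ++ by move=> a b c; apply: bT.
         ++ by move=> a b c H'; rewrite !G_join; apply: bJ.
      -- move=> k a b Ha Hb.
         have hk := ltn_ord k; have hpk := ltn_ord (p k).
         case: (ltnP k u) => ku.
         ++ have := C1 k ku => pku.
            have E : forall a, a \in triple p k -> Gm u (v - u) a = pt (v - u) 0 0.
              move=> a'; rewrite /triple !inE => /or3P [] /eqP ->;
              rewrite G_pt; try lia; apply: pt_congr; lia.
            by rewrite (E a Ha) (E b Hb); apply: bR.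
         case: (ltnP k v) => kv.
         ++ have hk3 : k - u < v - u by lia.
            have [E1 E2] := hsE (Ordinal hk3) k (esym (subnKC ku)).
            have hsk := ltn_ord (s (Ordinal hk3)).
            have M : forall a, a \in triple p k -> Gm u (v - u) a \in triple s (Ordinal hk3).
              move=> a'; rewrite /triple !inE => /or3P [] /eqP ->; rewrite G_pt; try lia;
              apply/or3P; [constructor 1 | constructor 2 | constructor 3];
              apply/eqP; apply: pt_congr => /=; lia.
            by apply: (beta_triple (M a Ha) (M b Hb)).
         ++ have := C4 k kv => pkv.
            have E : forall a, a \in triple p k -> Gm u (v - u) a = pt (v - u) (v - u) (v - u).
              move=> a'; rewrite /triple !inE => /or3P [] /eqP ->;
              rewrite G_pt; try lia; apply: pt_congr; lia.
            by rewrite (E a Ha) (E b Hb); apply: bR.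
  + move=> x; have [h1 h2] := ptn x; rewrite !gc_pt /cls_le /Fm; split.
    * rewrite (@gjoin_pt n u 0 _ _ (u + x.1) (u + x.2)); try lia; exact: bR.
    * rewrite (@gjoin_pt n _ _ v 0 v (u + x.2)); try lia; apply: (LAv _ _).1; lia.
  + move=> y; rewrite !gc_pt /cls_le -(ptK y).
    have [h1 h2] := ptn y; set i := val y.1 in h1 *; set j := val y.2 in h2 *.
    move=> H1 H2.
    case: (ltnP v i) => vi.
    * exists (pt (v - u) (v - u) 0); rewrite F_pt; try lia.
      rewrite (@gjoin_pt n i j v 0 i j) in H2; try lia.
      have -> : pt n (u + (v - u)) (u + 0) = pt n v u by apply: pt_congr; lia.
      apply: bT (LAv u _).1 (bS H2); lia.
    set i' := maxn u i.
    rewrite (@gjoin_pt n u 0 i j i' j) in H1; try lia.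
    case: (leqP j u) => ju.
    * exists (pt (v - u) (i' - u) 0); rewrite F_pt; try lia.
      have -> : pt n (u + (i' - u)) (u + 0) = pt n i' u by apply: pt_congr; lia.
      have A1 : beta p (pt n i' u) (pt n i' 0).
        apply: (bJpt (k := i') (l := 0) (LAu u _).1); lia.
      have A2 : beta p (pt n i' j) (pt n i' 0).
        apply: (bJpt (k := i') (l := 0) (LAu j _).1); lia.
      exact: bT A1 (bT (bS A2) H1).
    case: (leqP j v) => jv.
    * exists (pt (v - u) (i' - u) (j - u)); rewrite F_pt; try lia.
      have -> : pt n (u + (i' - u)) (u + (j - u)) = pt n i' j by apply: pt_congr; lia.
      exact: H1.
    * exists (pt (v - u) (v - u) 0); rewrite F_pt; try lia.
      have -> : pt n (u + (v - u)) (u + 0) = pt n v u by apply: pt_congr; lia.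
      rewrite (@gjoin_pt n i j v 0 v j) in H2; try lia.
      have A1 : beta p (pt n v j) (pt n i' j).
        apply: (bJpt (k := i') (l := j) (LAv v _).2); lia.
      have A0 : beta p (pt n v u) (pt n v 0) by apply: (LAv u _).1; lia.
      exact: bT A0 (bT (bS H2) (bT A1 H1)).
- move=> k; have hk := ltn_ord k; rewrite gc_pt /Fm /gc /=.
  have -> : pt n (u + k) (u + @ord0 (v - u)) = pt n (u + k) u by apply: pt_congr => //=; rewrite addn0.
  apply: (bJpt (k := u + k) (l := 0) (LAu u _).1); lia.
- move=> k; have hk := ltn_ord k; rewrite gc_pt gd_pt /Fm /gd /=.
  rewrite (@gjoin_pt n u 0 0 (u + k) u (u + k)); try lia.
  have -> : pt n (u + @ord0 (v - u)) (u + k) = pt n u (u + k) by apply: pt_congr => //=; rewrite addn0.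
  exact: bR.
Qed.
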